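(* Let $\mathbb{F}$ be a field with $\mathrm{Char}(\mathbb{F})=2$. Every nontrivial $2$-dimensional associative algebra over $\mathbb{F}$ is isomorphic to exactly one of the following algebras (given by their matrices of structure constants): <ol> <li>$As_{12,2}^1=\begin{pmatrix}0&0&0&0\\1&0&0&0\end{pmatrix}$;</li> <li>$As_{11,2}^2(\beta_1)=\begin{pmatrix}0&1&1&0\\ \beta_1&0&0&1\end{pmatrix}$, $\beta_1\in\mathbb{F}$, where $As_{11,2}^2(\beta_1)\cong As_{11,2}^2(\beta_1')$ if and only if $\beta_1'=b^2(\beta_1+a^2)$ for some $a,b\in\mathbb{F}$, $b\neq0$;</li> <li>$As_{6,2}^3=\begin{pmatrix}1&0&0&0\\0&0&1&0\end{pmatrix}$;</li> <li>$As_{4,2}^4(\beta_1)=\begin{pmatrix}1&1&1&0\\ \beta_1&0&0&1\end{pmatrix}$, $\beta_1\in\mathbb{F}$, where $As_{4,2}^4(\beta_1)\cong As_{4,2}^4(\beta_1')$ if and only if $\beta_1'=\beta_1+a+a^2$ for some $a\in\mathbb{F}$;</li> <li>$As_{3,2}^5=\begin{pmatrix}1&0&0&0\\0&0&0&0\end{pmatrix}$;</li> <li>$As_{3,2}^6=\begin{pmatrix}1&0&0&0\\0&1&0&0\end{pmatrix}$.</li> </ol> Algebras from different items are pairwise non-isomorphic.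
   Context: Let $\mathbb{F}$ be a field. A $2$-dimensional algebra over $\mathbb{F}$ is a $2$-dimensional $\mathbb{F}$-vector space with a bilinear product; it is associative if $(xy)z=x(yz)$ for all $x,y,z$. Fix a basis $(e_1,e_2)$. The matrix of structure constants $\begin{pmatrix}\alpha_1&\alpha_2&\alpha_3&\alpha_4\\ \beta_1&\beta_2&\beta_3&\beta_4\end{pmatrix}$ denotes the algebra with $e_1e_1=\alpha_1e_1+\beta_1e_2$, $e_1e_2=\alpha_2e_1+\beta_2e_2$, $e_2e_1=\alpha_3e_1+\beta_3e_2$, $e_2e_2=\alpha_4e_1+\beta_4e_2$. An algebra is nontrivial if its product is not identically zero. Two algebras are isomorphic if there is an invertible linear map $f$ between them with $f(xy)=f(x)f(y)$ for all $x,y$. *)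

(* Defs.v *)
From HB Require Import structures.
From mathcomp Require Import all_boot all_order all_algebra.
Set Implicit Arguments. Unset Strict Implicit. Unset Printing Implicit Defensive.
Import Order.TTheory GRing.Theory Num.Theory.
Local Open Scope ring_scope.

(* A 2-dimensional algebra over F with fixed basis (e_1,e_2) is given by its
   2x4 matrix of structure constants A: row 0 = (alpha_1..alpha_4) (coefficients
   of e_1), row 1 = (beta_1..beta_4) (coefficients of e_2); column k (0-based)
   corresponds to the product e_i e_j with k = 2 i + j (i,j 0-based):
   e1e1, e1e2, e2e1, e2e2. *)

Definition sc_col (i j : 'I_2) : 'I_4 := inord (i * 2 + j)%N.

Definition amul (F : fieldType) (A : 'M[F]_(2,4)) (x y : 'rV[F]_2) : 'rV[F]_2 :=
  \row_(l < 2) \sum_(i < 2) \sum_(j < 2) x 0 i * y 0 j * A l (sc_col i j).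

Definition assoc_alg (F : fieldType) (A : 'M[F]_(2,4)) : Prop :=
  forall x y z, amul A (amul A x y) z = amul A x (amul A y z).

Definition nontrivial_alg (F : fieldType) (A : 'M[F]_(2,4)) : Prop :=
  exists x y, amul A x y <> 0.

Definition alg_iso (F : fieldType) (A B : 'M[F]_(2,4)) : Prop :=
  exists f : 'M[F]_2, f \in unitmx /\
    forall x y, amul A x y *m f = amul B (x *m f) (y *m f).

Definition mk_sc (F : fieldType) (a1 a2 a3 a4 b1 b2 b3 b4 : F) : 'M[F]_(2,4) :=
  \matrix_(i < 2, j < 4)
    (if i == 0 :> nat then nth 0 [:: a1; a2; a3; a4] j
     else nth 0 [:: b1; b2; b3; b4] j).

Definition As1 (F : fieldType) : 'M[F]_(2,4) := mk_sc 0 0 0 0 1 0 0 0.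
Definition As2 (F : fieldType) (b : F) : 'M[F]_(2,4) := mk_sc 0 1 1 0 b 0 0 1.
Definition As3 (F : fieldType) : 'M[F]_(2,4) := mk_sc 1 0 0 0 0 0 1 0.
Definition As4 (F : fieldType) (b : F) : 'M[F]_(2,4) := mk_sc 1 1 1 0 b 0 0 1.
Definition As5 (F : fieldType) : 'M[F]_(2,4) := mk_sc 1 0 0 0 0 0 0 0.
Definition As6 (F : fieldType) : 'M[F]_(2,4) := mk_sc 1 0 0 0 0 1 0 0.

Definition in_item (F : fieldType) (k : nat) (A : 'M[F]_(2,4)) : Prop :=
  match k with
  | 1 => A = As1 F
  | 2 => exists b : F, A = As2 b
  | 3 => A = As3 F
  | 4 => exists b : F, A = As4 b
  | 5 => A = As5 F
  | 6 => A = As6 F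
  | _ => False
  end.

(* Main.v *)
Require Import Defs.
From HB Require Import structures.
From mathcomp Require Import all_boot all_order all_algebra.
From mathcomp Require Import ring.
From Stdlib Require Import Classical.
Import GRing.Theory.
Local Open Scope ring_scope.

Set Implicit Arguments. Unset Strict Implicit.

Section Basics.
Variable F : fieldType.
Implicit Types (A B : 'M[F]_(2,4)) (x y z u v w : 'rV[F]_2).

Lemma sum2 (G : 'I_2 -> F) : \sum_(i < 2) G i = G 0 + G 1.
Proof. rewrite big_ord_recl big_ord_recl big_ord0 addr0. congr (_ + G _); exact: val_inj. Qed.

Definition c00 : 'I_4 := sc_col 0 0.
Definition c01 : 'I_4 := sc_col 0 1.
Definition c10 : 'I_4 := sc_col 1 0.
Definition c11 : 'I_4 := sc_col 1 1.

Lemma amulE A x y l : amul A x y 0 l =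
  x 0 0 * y 0 0 * A l c00 + x 0 0 * y 0 1 * A l c01
  + x 0 1 * y 0 0 * A l c10 + x 0 1 * y 0 1 * A l c11.
Proof. rewrite mxE !sum2 /c00 /c01 /c10 /c11. ring. Qed.

Ltac rowring := apply/rowP => l; rewrite !(amulE, mxE); ring.

Lemma mDl A x y z : amul A (x + y) z = amul A x z + amul A y z.
Proof. rowring. Qed.
Lemma mDr A x y z : amul A x (y + z) = amul A x y + amul A x z.
Proof. rowring. Qed.
Lemma mZl A a x y : amul A (a *: x) y = a *: amul A x y.
Proof. rowring. Qed.
Lemma mZr A a x y : amul A x (a *: y) = a *: amul A x y.
Proof. rowring. Qed.
Lemma mNl A x y : amul A (- x) y = - amul A x y.
Proof. rowring. Qed.
Lemma mNr A x y : amul A x (- y) = - amul A x y.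
Proof. rowring. Qed.
Lemma m0l A y : amul A 0 y = 0.
Proof. rowring. Qed.
Lemma m0r A x : amul A x 0 = 0.
Proof. rowring. Qed.

Definition det2 x y := x 0 0 * y 0 1 - x 0 1 * y 0 0.

Lemma rv2P x y : x 0 0 = y 0 0 -> x 0 1 = y 0 1 -> x = y.
Proof.
move=> h0 h1; apply/rowP => j.
case: j => [[|[|//]] Hj].
  by rewrite (_ : Ordinal Hj = 0) //; apply: val_inj.
by rewrite (_ : Ordinal Hj = 1) //; apply: val_inj.
Qed.

Lemma D1 x y : x != 0 -> det2 x y = 0 -> exists k, y = k *: x.
Proof.
rewrite /det2 => nx hd.
have [h0|h0] := eqVneq (x 0 0) 0.
  have h1 : x 0 1 != 0.
    case: (eqVneq (x 0 1) 0) => [h1|//]; exfalso; move/eqP: nx; apply.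
    by apply: rv2P; rewrite mxE ?h0 ?h1.
  exists (y 0 1 / x 0 1); apply: rv2P; rewrite !mxE.
    move: hd; rewrite h0 mul0r sub0r => /eqP; rewrite oppr_eq0 mulf_eq0 (negPf h1) /= => /eqP ->.
    by rewrite ?h0 ?mulr0.
  by field.
exists (y 0 0 / x 0 0); apply: rv2P; rewrite !mxE.
  by field.
have e : y 0 1 = (x 0 0 * y 0 1) / x 0 0 by field.
by rewrite e; move/eqP: hd; rewrite subr_eq0 => /eqP ->; field.
Qed.

Lemma D2 u v x : det2 u v != 0 -> exists a b, x = a *: u + b *: v.
Proof.
rewrite /det2 => hd.
exists (det2 x v / det2 u v), (det2 u x / det2 u v).
apply: rv2P; rewrite !mxE /det2; field; exact: hd.
Qed.

Lemma det2_mul x y (M : 'M[F]_2) : det2 (x *m M) (y *m M) =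
  det2 x y * (M 0 0 * M 1 1 - M 0 1 * M 1 0).
Proof. rewrite /det2 !mxE !sum2; ring. Qed.


Lemma iso_sym A B : alg_iso A B -> alg_iso B A.
Proof.
case=> f [uf H]; exists (invmx f); split; first by rewrite unitmx_inv.
move=> x y; have := H (x *m invmx f) (y *m invmx f).
rewrite !(mulmxKV uf) => <-. by rewrite (mulmxK uf).
Qed.

Lemma iso_trans A B C : alg_iso A B -> alg_iso B C -> alg_iso A C.
Proof.
case=> f [uf H]; case=> g [ug K]; exists (f *m g); split.
  by rewrite unitmx_mul uf ug.
by move=> x y; rewrite !mulmxA H K.
Qed.

Definition bmx u v : 'M[F]_2 := \matrix_(i < 2, j < 2) (if i == 0 :> nat then u 0 j else v 0 j).

Lemma bmx_unit u v : det2 u v != 0 -> bmx u v \in unitmx.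
Proof.
move=> hd.
pose Q : 'M[F]_2 := \matrix_(i < 2, j < 2)
  ((if i == 0 :> nat then (if j == 0 :> nat then v 0 1 else - u 0 1)
   else (if j == 0 :> nat then - v 0 0 else u 0 0)) / det2 u v).
suff /mulmx1_unit [] : bmx u v *m Q = 1%:M by [].
apply/matrixP => i j; rewrite !mxE sum2 !mxE.
move: hd; rewrite /det2 => hd.
case: i => [[|[|//]] Hi]; case: j => [[|[|//]] Hj] /=; field; exact: hd.
Qed.

Lemma bmxE u v x : x *m bmx u v = x 0 0 *: u + x 0 1 *: v.
Proof. apply/rowP => j; rewrite !mxE sum2 !mxE /=. done. Qed.

Lemma iso_of_basis A B u v : det2 u v != 0 ->
  amul A u u = B 0 c00 *: u + B 1 c00 *: v ->
  amul A u v = B 0 c01 *: u + B 1 c01 *: v ->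
  amul A v u = B 0 c10 *: u + B 1 c10 *: v ->
  amul A v v = B 0 c11 *: u + B 1 c11 *: v -> alg_iso A B.
Proof.
move=> hd h1 h2 h3 h4; apply: iso_sym; exists (bmx u v); split; first exact: bmx_unit.
move=> x y; rewrite !bmxE !(mDl, mDr, mZl, mZr) h1 h2 h3 h4.
apply/rowP => l; rewrite !(amulE, mxE); ring.
Qed.


Section MK.
Variables a1 a2 a3 a4 b1 b2 b3 b4 : F.
Let M := mk_sc a1 a2 a3 a4 b1 b2 b3 b4.
Lemma mk00 : M 0 c00 = a1. Proof. by rewrite mxE /= inordK. Qed.
Lemma mk01 : M 0 c01 = a2. Proof. by rewrite mxE /= inordK. Qed.
Lemma mk02 : M 0 c10 = a3. Proof. by rewrite mxE /= inordK. Qed.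
Lemma mk03 : M 0 c11 = a4. Proof. by rewrite mxE /= inordK. Qed.
Lemma mk10 : M 1 c00 = b1. Proof. by rewrite mxE /= inordK. Qed.
Lemma mk11 : M 1 c01 = b2. Proof. by rewrite mxE /= inordK. Qed.
Lemma mk12 : M 1 c10 = b3. Proof. by rewrite mxE /= inordK. Qed.
Lemma mk13 : M 1 c11 = b4. Proof. by rewrite mxE /= inordK. Qed.
End MK.

Definition mkE := (mk00, mk01, mk02, mk03, mk10, mk11, mk12, mk13).

Lemma iso1 A u v : det2 u v != 0 -> amul A u u = v -> amul A u v = 0 ->
  amul A v u = 0 -> amul A v v = 0 -> alg_iso A (As1 F).
Proof.
move=> hd h1 h2 h3 h4; apply: iso_of_basis hd _ _ _ _; rewrite /As1 !mkE
  ?h1 ?h2 ?h3 ?h4 !scale0r ?scale1r ?add0r //.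
Qed.


Lemma iso2 A u v b : det2 u v != 0 -> amul A u u = b *: v -> amul A u v = u ->
  amul A v u = u -> amul A v v = v -> alg_iso A (As2 b).
Proof.
move=> hd h1 h2 h3 h4; apply: iso_of_basis hd _ _ _ _; rewrite /As2 !mkE
  ?h1 ?h2 ?h3 ?h4; by rewrite ?scale0r ?scale1r ?addr0 ?add0r.
Qed.

Lemma iso3 A u v : det2 u v != 0 -> amul A u u = u -> amul A u v = 0 ->
  amul A v u = v -> amul A v v = 0 -> alg_iso A (As3 F).
Proof.
move=> hd h1 h2 h3 h4; apply: iso_of_basis hd _ _ _ _; rewrite /As3 !mkE
  ?h1 ?h2 ?h3 ?h4; by rewrite ?scale0r ?scale1r ?addr0 ?add0r.
Qed.

Lemma iso4 A u v b : det2 u v != 0 -> amul A u u = u + b *: v -> amul A u v = u ->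
  amul A v u = u -> amul A v v = v -> alg_iso A (As4 b).
Proof.
move=> hd h1 h2 h3 h4; apply: iso_of_basis hd _ _ _ _; rewrite /As4 !mkE
  ?h1 ?h2 ?h3 ?h4; by rewrite ?scale0r ?scale1r ?addr0 ?add0r.
Qed.

Lemma iso5 A u v : det2 u v != 0 -> amul A u u = u -> amul A u v = 0 ->
  amul A v u = 0 -> amul A v v = 0 -> alg_iso A (As5 F).
Proof.
move=> hd h1 h2 h3 h4; apply: iso_of_basis hd _ _ _ _; rewrite /As5 !mkE
  ?h1 ?h2 ?h3 ?h4; by rewrite ?scale0r ?scale1r ?addr0 ?add0r.
Qed.

Lemma iso6 A u v : det2 u v != 0 -> amul A u u = u -> amul A u v = v ->
  amul A v u = 0 -> amul A v v = 0 -> alg_iso A (As6 F).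
Proof.
move=> hd h1 h2 h3 h4; apply: iso_of_basis hd _ _ _ _; rewrite /As6 !mkE
  ?h1 ?h2 ?h3 ?h4; by rewrite ?scale0r ?scale1r ?addr0 ?add0r.
Qed.


Lemma compl x : x != 0 -> exists v, det2 x v != 0.
Proof.
move=> nx.
have [h1|h1] := eqVneq (x 0 1) 0.
  exists (\row_(j < 2) (if j == 0 :> nat then 0 else 1)).
  rewrite /det2 !mxE /= h1 mul0r subr0 mulr1.
  case: (eqVneq (x 0 0) 0) => [h0|//]; exfalso; move/eqP: nx; apply.
  by apply: rv2P; rewrite mxE ?h0 ?h1.
exists (\row_(j < 2) (if j == 0 :> nat then 1 else 0)).
by rewrite /det2 !mxE /= mulr0 sub0r mulr1 oppr_eq0.
Qed.

End Basics.


Set Implicit Arguments. Unset Strict Implicit.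

Section Classif.
Variable F : fieldType.
Variable A : 'M[F]_(2,4).
Hypothesis hA' : assoc_alg A.
Local Notation m := (amul A).
Implicit Types (x y z u v w : 'rV[F]_2).

Let hA x y z : m (m x y) z = m x (m y z) := hA' x y z.

Ltac vring := apply/rowP => l; rewrite !(amulE, mxE); ring.
Ltac vfield := apply/rowP => l; rewrite !(amulE, mxE); field; try by rewrite ?mulf_neq0 ?expf_neq0 ?andbT ?andTb; try (apply/andP; split).
Ltac lin := rewrite ?(mDl, mDr, mNl, mNr, mZl, mZr, m0l, m0r).

Definition res_goal := exists k, (1 <= k <= 6)%N /\ exists B, in_item k B /\ alg_iso A B.

Lemma caseA u : det2 u (m u u) != 0 -> res_goal.
Proof.
move=> hu.
have [w hw] : exists w, m u u = w by eexists.
rewrite hw in hu.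
have [p [q hw3]] := D2 (m u w) hu.
have hwu : m w u = m u w by rewrite -hw hA.
have hww : m w w = (p * q) *: u + (p + q ^+ 2) *: w.
  by rewrite -{1}hw hA hw3; lin; rewrite hw hw3; vring.
have [hp|hp] := eqVneq p 0.
  have [hq|hq] := eqVneq q 0.
    exists 1%N; split => //; exists (As1 F); split => //.
    apply: iso1 hu hw _ _ _.
    - by rewrite hw3 hp hq !scale0r addr0.
    - by rewrite hwu hw3 hp hq !scale0r addr0.
    - rewrite hww hp hq; vring.
  exists 5%N; split => //; exists (As5 F); split => //.
  refine (@iso5 F A (q^-2 *: w) (u - q^-1 *: w) _ _ _ _ _).
  - have -> : det2 (q^-2 *: w) (u - q^-1 *: w) = - q^-2 * det2 u w.
      by rewrite /det2 !mxE; ring.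
    by rewrite mulf_neq0 // oppr_eq0 invr_eq0 expf_neq0.
  - lin; rewrite hww hp; vfield.
  - lin; rewrite ?hww ?hwu ?hw ?hw3 hp; vfield.
  - lin; rewrite ?hww ?hwu ?hw ?hw3 hp; vfield.
  - lin; rewrite ?hww ?hwu ?hw ?hw3 hp; vfield.
have [e he] : exists e, p^-1 *: (w - q *: u) = e by eexists.
have heu : m e u = u by rewrite -he; lin; rewrite hwu hw3 hw; vfield.
have hue : m u e = u by rewrite -he; lin; rewrite hw3 hw; vfield.
have hew : m e w = w by rewrite -he; lin; rewrite hww hw3; vfield.
have hwe : m w e = w by rewrite -he; lin; rewrite hww hwu hw3; vfield.
have hee : m e e = e by rewrite -{1}he; lin; rewrite hwe hue; exact: he.
have [hq|hq] := eqVneq q 0.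
  exists 2%N; split => //; exists (As2 p); split; first by exists p.
  refine (@iso2 F A u e p _ _ hue heu hee).
  - rewrite -he; have -> : det2 u (p^-1 *: (w - q *: u)) = p^-1 * det2 u w.
      by rewrite /det2 !mxE; ring.
    by rewrite mulf_neq0 // invr_eq0.
  - rewrite hw -he hq; vfield.
exists 4%N; split => //; exists (As4 (p / q ^+ 2)); split; first by eexists.
refine (@iso4 F A (q^-1 *: u) e (p / q ^+ 2) _ _ _ _ _).
- rewrite -he; have -> : det2 (q^-1 *: u) (p^-1 *: (w - q *: u)) = q^-1 * p^-1 * det2 u w.
    by rewrite /det2 !mxE; ring.
  by rewrite !mulf_neq0 // invr_eq0.
- lin; rewrite hw -he; vfield.
- by lin; rewrite hue.
- by lin; rewrite heu.
- exact: hee.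
Qed.


Hypothesis hB : forall x, det2 x (m x x) = 0.

Lemma sqk x : exists k, m x x = k *: x.
Proof.
have [->|nx] := eqVneq x 0; first by exists 0; rewrite m0l scale0r.
exact: D1 nx (hB x).
Qed.

Lemma caseB1 : (forall x, m x x = 0) -> ~ nontrivial_alg A.
Proof.
move=> h0 [x [y nxy]].
have [w hw] : exists w, m x y = w by eexists.
rewrite hw in nxy; move/eqP: nxy => nxy.
have hxw : m x w = 0 by rewrite -hw -hA h0 m0l.
have hwy : m w y = 0 by rewrite -hw hA h0 m0r.
have [hd|hd] := eqVneq (det2 x y) 0.
  have [x0|nx] := eqVneq x 0; first by move: nxy; rewrite -hw x0 m0l eqxx.
  have [k hk] := D1 nx hd.
  by move: nxy; rewrite -hw hk mZr h0 scaler0 eqxx.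
have [a [b hab]] := D2 w hd.
move: hxw hwy; rewrite hab; lin; rewrite !h0 hw => h1 h2.
have b0 : b = 0.
  by move: h1; rewrite scaler0 add0r => /eqP; rewrite scaler_eq0 (negPf nxy) orbF => /eqP.
have a0 : a = 0.
  by move: h2; rewrite scaler0 addr0 => /eqP; rewrite scaler_eq0 (negPf nxy) orbF => /eqP.
by move: nxy; rewrite hab a0 b0 !scale0r addr0 eqxx.
Qed.


Lemma det_swap x y : det2 y x = - det2 x y.
Proof. rewrite /det2; ring. Qed.

Lemma caseB2 x : m x x != 0 -> res_goal.
Proof.
move=> nxx.
have [lam hl] := sqk x.
have [l0|l0] := eqVneq lam 0; first by move: nxx; rewrite hl l0 scale0r eqxx.
have [e he] : exists e, lam^-1 *: x = e by eexists.
have ee : m e e = e by rewrite -he; lin; rewrite hl; vfield.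
have ne : e != 0.
  case: (eqVneq e 0) => [e0|//]; move: nxx.
  have -> : x = lam *: e by rewrite -he scalerA mulfV // scale1r.
  by rewrite e0 scaler0 m0l eqxx.
have [v hv] := compl ne.
have eeL X : m e (m e X) = m e X by rewrite -hA ee.
have [w01 hw01] : exists w, m e v - m (m e v) e = w by eexists.
have [w10 hw10] : exists w, m v e - m (m e v) e = w by eexists.
have [w11 hw11] : exists w, v - m e v - m v e + m (m e v) e = w by eexists.
have P1 : m e w01 = w01 by rewrite -hw01; lin; rewrite !hA ?eeL ?ee ?subrr //; vring.
have P2 : m w01 e = 0 by rewrite -hw01; lin; rewrite !hA ?eeL ?ee ?subrr //; vring.
have P3 : m e w10 = 0 by rewrite -hw10; lin; rewrite !hA ?eeL ?ee ?subrr //; vring.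
have P4 : m w10 e = w10 by rewrite -hw10; lin; rewrite !hA ?eeL ?ee ?subrr //; vring.
have P5 : m e w11 = 0 by rewrite -hw11; lin; rewrite !hA ?eeL ?ee ?subrr //; vring.
have P6 : m w11 e = 0 by rewrite -hw11; lin; rewrite !hA ?eeL ?ee ?subrr //; vring.
have [z01|n01] := eqVneq w01 0; last first.
  have d : det2 e w01 != 0.
    case: (eqVneq (det2 e w01) 0) => [d0|//]; exfalso.
    have [k hk] := D1 ne d0.
    move: P2; rewrite hk mZl ee => /eqP; rewrite scaler_eq0 (negPf ne) orbF => /eqP k0.
    by move: n01; rewrite hk k0 scale0r eqxx.
  exists 6%N; split => //; exists (As6 F); split => //.
  refine (@iso6 F A e w01 d ee P1 P2 _).
  by rewrite -{2}P1 -hA P2 m0l.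
have [z10|n10] := eqVneq w10 0; last first.
  have d : det2 e w10 != 0.
    case: (eqVneq (det2 e w10) 0) => [d0|//]; exfalso.
    have [k hk] := D1 ne d0.
    move: P3; rewrite hk mZr ee => /eqP; rewrite scaler_eq0 (negPf ne) orbF => /eqP k0.
    by move: n10; rewrite hk k0 scale0r eqxx.
  exists 3%N; split => //; exists (As3 F); split => //.
  refine (@iso3 F A e w10 d ee P3 P4 _).
  by rewrite -{1}P4 hA P3 m0r.
have [d|d] := eqVneq (det2 e w11) 0.
  have [k hk] := D1 ne d.
  have k0 : k = 0.
    by move: P5; rewrite hk mZr ee => /eqP; rewrite scaler_eq0 (negPf ne) orbF => /eqP.
  have hc : m (m e v) e = v.
    suff : v - m (m e v) e = 0 by move/eqP; rewrite subr_eq0 eq_sym => /eqP.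
    have -> : v - m (m e v) e = w11 + w01 + w10 by rewrite -hw11 -hw01 -hw10; vring.
    by rewrite hk k0 z01 z10 scale0r !addr0.
  have hev : m e v = v by apply/eqP; rewrite -subr_eq0 -{2}hc hw01 z01.
  have hve : m v e = v by apply/eqP; rewrite -subr_eq0 -{2}hc hw10 z10.
  have [k' hk'] := sqk v.
  have hv' : det2 v e != 0 by rewrite det_swap oppr_eq0.
  have [k0'|nk'] := eqVneq k' 0.
    exists 2%N; split => //; exists (As2 0); split; first by exists 0.
    refine (@iso2 F A v e 0 hv' _ hve hev ee).
    by rewrite hk' k0' !scale0r.
  exists 4%N; split => //; exists (As4 0); split; first by exists 0.
  refine (@iso4 F A (k'^-1 *: v) e 0 _ _ _ _ ee).
  - have -> : det2 (k'^-1 *: v) e = k'^-1 * det2 v e by rewrite /det2 !mxE; ring.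
    by rewrite mulf_neq0 // invr_eq0.
  - lin; rewrite hk'; vfield.
  - by lin; rewrite hve.
  - by lin; rewrite hev.
have nw : w11 != 0.
  apply: contraNneq d => ->; apply/eqP; rewrite /det2 !mxE; ring.
have [mu hmu] := sqk w11.
have [mu0|nmu] := eqVneq mu 0.
  exists 5%N; split => //; exists (As5 F); split => //.
  refine (@iso5 F A e w11 d ee P5 P6 _).
  by rewrite hmu mu0 scale0r.
exists 4%N; split => //; exists (As4 0); split; first by exists 0.
refine (@iso4 F A e (e + mu^-1 *: w11) 0 _ _ _ _ _).
- have -> : det2 e (e + mu^-1 *: w11) = mu^-1 * det2 e w11 by rewrite /det2 !mxE; ring.
  by rewrite mulf_neq0 // invr_eq0.
- by rewrite ee scale0r addr0.
- by lin; rewrite ee P5 scaler0 addr0.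
- by lin; rewrite ee P6 scaler0 addr0.
- lin; rewrite ee P5 P6 hmu; vfield.
Qed.

End Classif.

Lemma classify (F : fieldType) (A : 'M[F]_(2,4)) : assoc_alg A -> nontrivial_alg A ->
  exists k, (1 <= k <= 6)%N /\ exists B, in_item k B /\ alg_iso A B.
Proof.
move=> hA hN.
case: (classic (exists u, det2 u (amul A u u) != 0)) => [[u hu]|nA].
  exact: (caseA hA hu).
have hB : forall x, det2 x (amul A x x) = 0.
  move=> x; case: (eqVneq (det2 x (amul A x x)) 0) => // h; exfalso; apply: nA; by exists x.
case: (classic (exists x, amul A x x != 0)) => [[x hx]|n2].
  exact: (caseB2 hA hB hx).
exfalso; apply: (caseB1 hA _ hN) => x.
case: (eqVneq (amul A x x) 0) => // h; exfalso; apply: n2; by exists x.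
Qed.


Set Implicit Arguments. Unset Strict Implicit.

Section Iso24.
Variable F : fieldType.
Hypothesis two : (2 : F) = 0.
Implicit Types (A B : 'M[F]_(2,4)) (x y z u v w : 'rV[F]_2).
Implicit Types (a b c : F).

Definition ev (a b : F) : 'rV[F]_2 := \row_(j < 2) (if j == 0 :> nat then a else b).
Lemma ev0 a b : ev a b 0 0 = a. Proof. by rewrite mxE. Qed.
Lemma ev1 a b : ev a b 0 1 = b. Proof. by rewrite mxE. Qed.

Ltac crunch := apply: rv2P; rewrite ?amulE; unfold As1, As2, As3, As4, As5, As6; rewrite ?mkE ?amulE ?mkE !mxE /=.

Lemma negself (x : F) : - x = x.
Proof. by apply/eqP; rewrite eq_sym -subr_eq0 opprK -mulr2n -mulr_natl two mul0r. Qed.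

Lemma As2_unit b x : amul (As2 b) (ev 0 1) x = x /\ amul (As2 b) x (ev 0 1) = x.
Proof. by split; crunch; ring. Qed.

Lemma As4_unit b x : amul (As4 b) (ev 0 1) x = x /\ amul (As4 b) x (ev 0 1) = x.
Proof. by split; crunch; ring. Qed.

Lemma iso2_back b (b' : F) a c : c != 0 -> b' = c ^+ 2 * (b + a ^+ 2) -> alg_iso (As2 b) (As2 b').
Proof.
move=> nc hb; apply: (@iso2 F (As2 b) (ev c (c * a)) (ev 0 1) b').
- by rewrite /det2 !mxE /= mulr0 subr0 mulr1.
- rewrite hb; crunch; ring: two.
- crunch; ring.
- crunch; ring.
- crunch; ring.
Qed.

Lemma iso4_back b a : alg_iso (As4 b) (As4 (b + a + a ^+ 2)).
Proof.
apply: (@iso4 F (As4 b) (ev 1 a) (ev 0 1) (b + a + a ^+ 2)).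
- by rewrite /det2 !mxE /= mulr0 subr0 mulr1 oner_eq0.
- crunch; ring: two.
- crunch; ring: two.
- crunch; ring: two.
- crunch; ring.
Qed.


Lemma iso_unit A B f : f \in unitmx ->
  (forall x y, amul A x y *m f = amul B (x *m f) (y *m f)) ->
  (forall x, amul A (ev 0 1) x = x) -> (forall x, amul B x (ev 0 1) = x) ->
  ev 0 1 *m f = ev 0 1.
Proof.
move=> uf H hA hB.
have L y : amul B (ev 0 1 *m f) y = y.
  by rewrite -(mulmxKV uf y) -H hA.
by rewrite -[RHS](L (ev 0 1)) hB.
Qed.

Lemma e1_ne f h0 h1 : f \in unitmx -> ev 0 1 *m f = ev 0 1 -> ev 1 0 *m f = ev h0 h1 -> h0 != 0.
Proof.
move=> uf hg hh; case: (eqVneq h0 0) => [z|//]; exfalso.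
have : ev 1 0 *m f = (h1 *: ev 0 1) *m f by rewrite hh -scalemxAl hg z; apply: rv2P; rewrite !mxE /=; ring.
move/(congr1 (fun r : 'rV[F]_2 => r *m invmx f)); rewrite !(mulmxK uf) => /(congr1 (fun r : 'rV[F]_2 => r 0 0)).
by rewrite !mxE /= mulr0 => /eqP; rewrite oner_eq0.
Qed.

Lemma iso2_fwd b (b' : F) : alg_iso (As2 b) (As2 b') -> exists a c, c != 0 /\ b' = c ^+ 2 * (b + a ^+ 2).
Proof.
case=> f [uf H].
have hg := iso_unit uf H (fun x => (As2_unit b x).1) (fun x => (As2_unit b' x).2).
have [h hh] : exists h, ev 1 0 *m f = h by eexists.
have hh' : ev 1 0 *m f = ev (h 0 0) (h 0 1) by rewrite hh; apply: rv2P; rewrite !mxE.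
have n0 := e1_ne uf hg hh'.
have e11 : amul (As2 b) (ev 1 0) (ev 1 0) = b *: ev 0 1 by crunch; ring.
have := H (ev 1 0) (ev 1 0); rewrite hh e11 -scalemxAl hg => /(congr1 (fun r : 'rV[F]_2 => r 0 1)).
rewrite amulE /As2 !mkE !mxE /= => hb.
exists (h 0 1), (h 0 0)^-1; split; first by rewrite invr_eq0.
have -> : b + h 0 1 ^+ 2 = b' * h 0 0 ^+ 2 by rewrite -[b]mulr1 hb; ring: two.
by field.
Qed.

Lemma iso4_fwd b (b' : F) : alg_iso (As4 b) (As4 b') -> exists a, b' = b + a + a ^+ 2.
Proof.
case=> f [uf H].
have hg := iso_unit uf H (fun x => (As4_unit b x).1) (fun x => (As4_unit b' x).2).
have [h hh] : exists h, ev 1 0 *m f = h by eexists.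
have hh' : ev 1 0 *m f = ev (h 0 0) (h 0 1) by rewrite hh; apply: rv2P; rewrite !mxE.
have n0 := e1_ne uf hg hh'.
have e11 : amul (As4 b) (ev 1 0) (ev 1 0) = ev 1 0 + b *: ev 0 1 by crunch; ring.
have := H (ev 1 0) (ev 1 0); rewrite hh e11 mulmxDl -scalemxAl hg hh.
move=> E.
have h0 := congr1 (fun r : 'rV[F]_2 => r 0 0) E; have h1 := congr1 (fun r : 'rV[F]_2 => r 0 1) E.
move: h0 h1; rewrite /= !amulE /As4 !mkE !mxE /= => h0 h1.
rewrite !mulr0 !mulr1 !addr0 in h0 h1.
have e0 : h 0 0 = 1.
  have : h 0 0 * (h 0 0 - 1) = 0.
    transitivity ((h 0 0 * h 0 0 + h 0 0 * h 0 1 + h 0 1 * h 0 0) - h 0 0 - 2 * (h 0 0 * h 0 1)).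
      by ring.
    by rewrite -h0 two; ring.
  move/eqP; rewrite mulf_eq0 (negPf n0) /= subr_eq0 => /eqP //.
exists (h 0 1).
move: h1; rewrite e0 => h1.
have -> : b' = h 0 1 + b - h 0 1 ^+ 2 by rewrite h1; ring.
transitivity (b + h 0 1 - h 0 1 ^+ 2); first by ring.
by rewrite negself.
Qed.


End Iso24.


Set Implicit Arguments. Unset Strict Implicit.

Section Inv.
Variable F : fieldType.
Implicit Types (A B : 'M[F]_(2,4)) (x y z u v w : 'rV[F]_2).
Implicit Types (a b c : F).

Definition Nil3 A := forall x y z, amul A (amul A x y) z = 0.
Definition Un A := exists u, forall x, amul A u x = x /\ amul A x u = x.
Definition Sq A := forall x y, det2 (amul A (amul A x x) y) y = 0.
Definition Ld A := forall x y, det2 (amul A x y) y = 0.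
Definition Rd A := forall x y, det2 (amul A x y) x = 0.

Lemma transfer A B : alg_iso A B ->
  (Nil3 A -> Nil3 B) /\ (Un A -> Un B) /\ (Sq A -> Sq B) /\ (Ld A -> Ld B) /\ (Rd A -> Rd B).
Proof.
case=> f [uf H].
have S x : x = (x *m invmx f) *m f by rewrite (mulmxKV uf).
split; [|split; [|split; [|split]]].
- move=> h x y z; rewrite (S x) (S y) (S z) -H -H h; exact: mul0mx.
- case=> u hu; exists (u *m f) => x; rewrite (S x) -!H.
  by have [-> ->] := hu (x *m invmx f).
- move=> h x y; rewrite (S x) (S y) -!H det2_mul h; exact: mul0r.
- move=> h x y; rewrite (S x) (S y) -!H det2_mul h; exact: mul0r.
- move=> h x y; rewrite (S x) (S y) -!H det2_mul h; exact: mul0r.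
Qed.

Lemma transfer_iff A B : alg_iso A B ->
  (Nil3 A <-> Nil3 B) /\ (Un A <-> Un B) /\ (Sq A <-> Sq B) /\ (Ld A <-> Ld B) /\ (Rd A <-> Rd B).
Proof.
move=> h; have := transfer h; have := transfer (iso_sym h); tauto.
Qed.


Ltac crunch := apply: rv2P; rewrite ?amulE; unfold As1, As2, As3, As4, As5, As6; rewrite ?mkE ?amulE ?mkE !mxE /=.
Ltac ev_in E := rewrite ?amulE in E; unfold As1, As2, As3, As4, As5, As6 in E;
  rewrite ?mkE ?amulE ?mkE !mxE /= in E;
  rewrite ?(mulr0, mul0r, mulr1, mul1r, addr0, add0r, subr0, sub0r) in E.
Ltac onez E := by move/eqP: E; rewrite ?oppr_eq0 ?oner_eq0 // eq_sym oner_eq0.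

Definition c0 (r : 'rV[F]_2) := r 0 0.
Definition c1 (r : 'rV[F]_2) := r 0 1.

Lemma p1 : Nil3 (As1 F).
Proof. by move=> x y z; crunch; ring. Qed.

Lemma nN2 b : ~ Nil3 (As2 b).
Proof. move/(_ (ev 0 1) (ev 0 1) (ev 0 1))/(congr1 c1) => E; rewrite /c1 in E; ev_in E; onez E. Qed.
Lemma nN4 b : ~ Nil3 (As4 b).
Proof. move/(_ (ev 0 1) (ev 0 1) (ev 0 1))/(congr1 c1) => E; rewrite /c1 in E; ev_in E; onez E. Qed.
Lemma nN3 : ~ Nil3 (As3 F).
Proof. move/(_ (ev 1 0) (ev 1 0) (ev 1 0))/(congr1 c0) => E; rewrite /c0 in E; ev_in E; onez E. Qed.
Lemma nN5 : ~ Nil3 (As5 F).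
Proof. move/(_ (ev 1 0) (ev 1 0) (ev 1 0))/(congr1 c0) => E; rewrite /c0 in E; ev_in E; onez E. Qed.
Lemma nN6 : ~ Nil3 (As6 F).
Proof. move/(_ (ev 1 0) (ev 1 0) (ev 1 0))/(congr1 c0) => E; rewrite /c0 in E; ev_in E; onez E. Qed.

Lemma u2 b : Un (As2 b).
Proof. exists (ev 0 1) => x; split; crunch; ring. Qed.
Lemma u4 b : Un (As4 b).
Proof. exists (ev 0 1) => x; split; crunch; ring. Qed.

Lemma nU3 : ~ Un (As3 F).
Proof. case=> u /(_ (ev 0 1)) [/(congr1 c1) E _]; rewrite /c1 in E; ev_in E; onez E. Qed.
Lemma nU5 : ~ Un (As5 F).
Proof. case=> u /(_ (ev 0 1)) [/(congr1 c1) E _]; rewrite /c1 in E; ev_in E; onez E. Qed.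
Lemma nU6 : ~ Un (As6 F).
Proof. case=> u /(_ (ev 0 1)) [_ /(congr1 c1) E]; rewrite /c1 in E; ev_in E; onez E. Qed.

Lemma nS4 b : ~ Sq (As4 b).
Proof. move/(_ (ev 1 0) (ev 0 1)) => E; rewrite /det2 in E; ev_in E; onez E. Qed.

Lemma r3 : Rd (As3 F).
Proof. move=> x y; rewrite /det2 !amulE /As3 !mkE; ring. Qed.
Lemma nR5 : ~ Rd (As5 F).
Proof. move/(_ (ev 1 1) (ev 1 0)) => E; rewrite /det2 in E; ev_in E; onez E. Qed.
Lemma nR6 : ~ Rd (As6 F).
Proof. move/(_ (ev 1 0) (ev 0 1)) => E; rewrite /det2 in E; ev_in E; onez E. Qed.
Lemma l6 : Ld (As6 F).
Proof. move=> x y; rewrite /det2 !amulE /As6 !mkE; ring. Qed.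
Lemma nL5 : ~ Ld (As5 F).
Proof. move/(_ (ev 1 0) (ev 1 1)) => E; rewrite /det2 in E; ev_in E; onez E. Qed.


Lemma s2 (two : (2 : F) = 0) b : Sq (As2 b).
Proof.
move=> x y; transitivity (2 * (x 0 0 * x 0 1 * (y 0 1 ^+ 2 - b * y 0 0 ^+ 2))); last by rewrite two mul0r.
rewrite /det2 !amulE /As2 !mkE; ring.
Qed.

Definition pr k A : Prop :=
  match k with
  | 1 => Nil3 A
  | 2 => ~ Nil3 A /\ Un A /\ Sq A
  | 3 => ~ Nil3 A /\ ~ Un A /\ Rd A
  | 4 => ~ Nil3 A /\ Un A /\ ~ Sq A
  | 5 => ~ Nil3 A /\ ~ Un A /\ ~ Rd A /\ ~ Ld A
  | 6 => ~ Nil3 A /\ ~ Un A /\ ~ Rd A /\ Ld A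
  | _ => False
  end.

Lemma prof (two : (2 : F) = 0) k A : in_item k A -> pr k A.
Proof.
case: k => [//|[|[|[|[|[|[|k]]]]]]] //=.
- by move=> ->; exact: p1.
- by case=> b ->; split; [exact: nN2 | split; [exact: u2 | exact: s2]].
- by move=> ->; split; [exact: nN3 | split; [exact: nU3 | exact: r3]].
- by case=> b ->; split; [exact: nN4 | split; [exact: u4 | exact: nS4]].
- by move=> ->; split; [exact: nN5 | split; [exact: nU5 | split; [exact: nR5 | exact: nL5]]].
- by move=> ->; split; [exact: nN6 | split; [exact: nU6 | split; [exact: nR6 | exact: l6]]].
Qed.

Lemma distinct (two : (2 : F) = 0) (k l : nat) A B : k <> l ->
  in_item k A -> in_item l B -> ~ alg_iso A B.
Proof.
move=> kl hk hl hiso.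
have := transfer_iff hiso; have := prof two hk; have := prof two hl.
case: k kl {hk} => [|[|[|[|[|[|[|k]]]]]]] kl //=;
case: l kl {hl} => [|[|[|[|[|[|[|l]]]]]]] kl //=; try tauto; by case: kl.
Qed.

End Inv.


Theorem mainTheorem2 (F : fieldType) (char2 : 2 \in [pchar F]) :
  (forall A : 'M[F]_(2,4), assoc_alg A -> nontrivial_alg A ->
     exists k, (1 <= k <= 6)%N /\ exists B, in_item k B /\ alg_iso A B)
  /\ (forall b b' : F, alg_iso (As2 b) (As2 b') <->
        exists a c : F, c != 0 /\ b' = c ^+ 2 * (b + a ^+ 2))
  /\ (forall b b' : F, alg_iso (As4 b) (As4 b') <->
        exists a : F, b' = b + a + a ^+ 2)
  /\ (forall (k l : nat) (A B : 'M[F]_(2,4)), k <> l ->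
        in_item k A -> in_item l B -> ~ alg_iso A B).
Proof.
have two : (2 : F) = 0 by apply: pcharf0.
split; first by move=> A hA hN; exact: classify hA hN.
split.
  move=> b b'; split; first by move=> h; exact: (iso2_fwd two h).
  by case=> a [c [nc hb]]; exact: (iso2_back two nc hb).
split.
  move=> b b'; split; first by move=> h; exact: (iso4_fwd two h).
  by case=> a ->; exact: (@iso4_back F two b a).
by move=> k l A B; exact: (distinct two).
Qed.
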